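(* In the power-splitting setting described in the context, let $X_k>0$, $Y_k\ge0$ and $\lambda_k\ge0$. For a nonzero real $\theta$, say the system $S(\theta)$ is feasible if there exist $(\boldsymbol\rho,\mathbf{p},\mathbf{w}_{\mathrm{p}})$ satisfying (F) together with $\sum_n|y_n|^2\ge\lambda_kY_k$, $\sum_nx_n^2|g_n|^2\ge\lambda_kX_k$, and $\theta\,\mathbf{x}\circ\mathbf{g}=\mathbf{y}$. If $S(\theta)$ is feasible for some nonzero real $\theta$, then $S(\theta_k)$ is feasible for $\theta_k=\sqrt{Y_k/X_k}$; that is, the coefficient in the system can be set to $\theta_k=\sqrt{Y_k/X_k}$.
   Context: An access point (HAP) with $K$ antennas and fixed normalized transmit power $p_{\mathrm{o}}>0$ serves $N$ single-antenna relays $\mathcal{N}=\{1,\dots,N\}$ sharing spectrum with $M$ cellular users $\mathcal{C}=\{1,\dots,M\}$. $\mathbf{f}_n\in\mathbb{C}^K$ is the HAP-to-relay-$n$ channel, $\mathbf{g}\in\mathbb{C}^N$ the relays-to-receiver channel, $\eta\in(0,1]$ the energy conversion efficiency. Variables: HAP beamformer $\mathbf{w}_{\mathrm{p}}\in\mathbb{C}^K$ with $\mathbf{W}_{\mathrm{p}}=\mathbf{w}_{\mathrm{p}}\mathbf{w}_{\mathrm{p}}^H$, PS ratios $\boldsymbol\rho\in[0,1]^N$, relay powers $\mathbf{p}\in\mathbb{R}^N_{\ge0}$; $y_n=\sqrt{(1-\rho_n)p_{\mathrm{o}}}\,\mathbf{f}_n^H\mathbf{w}_{\mathrm{p}}$,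 $x_n=\big(p_n/((1-\rho_n)p_{\mathrm{o}}\mathbf{f}_n^H\mathbf{W}_{\mathrm{p}}\mathbf{f}_n+1)\big)^{1/2}$, $\circ$ the entrywise product. Constraints (F): (i) for each $m\in\mathcal{C}$, $\sup_{\mathbb{P}\in\mathcal{P}_m}\mathbb{P}\big(\sum_n|z_{nm}|^2p_n\ge\bar\phi_m\big)\le\zeta$, where $\mathcal{P}_m$ is the set of all distributions of the random channel $\mathbf{z}_m\in\mathbb{C}^N$ (relays to user $m$) with prescribed first- and second-order moments, $\bar\phi_m>0$, $\zeta\in(0,1)$; (ii) $p_n\le\eta p_{\mathrm{o}}\rho_n\mathbf{f}_n^H\mathbf{W}_{\mathrm{p}}\mathbf{f}_n$ for all $n$; (iii) $0\le\rho_n\le1$, $\mathbf{p}\succeq\mathbf{0}$, $\mathrm{Tr}(\mathbf{W}_{\mathrm{p}})\le1$. *)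

(* Defs.v *)
From HB Require Import structures.
From mathcomp Require Import all_boot all_order all_algebra.
From mathcomp Require Import all_classical all_reals all_analysis.
From mathcomp Require Import complex.
Set Implicit Arguments. Unset Strict Implicit. Unset Printing Implicit Defensive.
Import Order.TTheory GRing.Theory Num.Theory.
Local Open Scope ring_scope.
Local Open Scope classical_set_scope.

Section PS.
Variable R : realType.
Local Notation C := R[i].

Definition toC (r : R) : C := Complex r 0.

Definition sqmod (z : C) : R := complex.Re z ^+ 2 + complex.Im z ^+ 2.

Definition hconj (m n : nat) (A : 'M[C]_(m, n)) : 'M[C]_(n, m) :=
  (map_mx (@conjc R) A)^T.

Definition Wp (K : nat) (w : 'cV[C]_K) : 'M[C]_K := w *m hconj w.

(* f_n^H W_p f_n (a real number; we take its real part) *)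
Definition quadf (K : nat) (fn w : 'cV[C]_K) : R :=
  complex.Re ((hconj fn *m Wp w *m fn) 0 0).

Definition ysig (K N : nat) (po : R) (f : 'I_N -> 'cV[C]_K) (rho : 'I_N -> R)
  (w : 'cV[C]_K) (n : 'I_N) : C :=
  toC (Num.sqrt ((1 - rho n) * po)) * (hconj (f n) *m w) 0 0.

Definition xsig (K N : nat) (po : R) (f : 'I_N -> 'cV[C]_K) (rho p : 'I_N -> R)
  (w : 'cV[C]_K) (n : 'I_N) : R :=
  Num.sqrt (p n / ((1 - rho n) * po * quadf (f n) w + 1)).

Definition cintegrable (d : measure_display) (T : measurableType d)
  (P : probability T R) (h : T -> C) : Prop :=
  P.-integrable setT (fun t => (complex.Re (h t))%:E) /\
  P.-integrable setT (fun t => (complex.Im (h t))%:E).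

Definition cexpect (d : measure_display) (T : measurableType d)
  (P : probability T R) (h : T -> C) : C :=
  Complex (fine (\int[P]_t (complex.Re (h t))%:E)) (fine (\int[P]_t (complex.Im (h t))%:E)).

(* A distribution is represented
   by a random vector Z on an arbitrary probability space. *)
Definition dr_chance (N : nat) (p : 'I_N -> R) (mu : 'I_N -> C) (Smx : 'M[C]_N)
  (phibar zeta : R) : Prop :=
  forall (d : measure_display) (T : measurableType d) (P : probability T R)
         (Z : 'I_N -> T -> C),
    (forall n, measurable_fun setT (fun t => complex.Re (Z n t)) /\
               measurable_fun setT (fun t => complex.Im (Z n t))) ->
    (forall n, cintegrable P (Z n) /\ cexpect P (Z n) = mu n) ->
    (forall n n', cintegrable P (fun t => Z n t * conjc (Z n' t)) /\
                  cexpect P (fun t => Z n t * conjc (Z n' t)) = Smx n n') ->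
    (P [set t | (phibar <= \sum_(n < N) sqmod (Z n t) * p n)%R] <= zeta%:E)%E.

Definition constraintsF (K N M : nat) (po eta zeta : R)
  (f : 'I_N -> 'cV[C]_K) (mu : 'I_M -> 'I_N -> C) (Smx : 'I_M -> 'M[C]_N)
  (phibar : 'I_M -> R) (rho p : 'I_N -> R) (w : 'cV[C]_K) : Prop :=
  (forall m, dr_chance p (mu m) (Smx m) (phibar m) zeta) /\
  (forall n, p n <= eta * po * rho n * quadf (f n) w) /\
  (forall n, 0 <= rho n <= 1) /\
  (forall n, 0 <= p n) /\
  complex.Re (\tr (Wp w)) <= 1.

Definition feasibleS (K N M : nat) (po eta zeta X Y lam : R)
  (f : 'I_N -> 'cV[C]_K) (g : 'I_N -> C)
  (mu : 'I_M -> 'I_N -> C) (Smx : 'I_M -> 'M[C]_N) (phibar : 'I_M -> R)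
  (theta : R) : Prop :=
  exists (rho p : 'I_N -> R) (w : 'cV[C]_K),
    constraintsF po eta zeta f mu Smx phibar rho p w /\
    lam * Y <= \sum_(n < N) sqmod (ysig po f rho w n) /\
    lam * X <= \sum_(n < N) (xsig po f rho p w n) ^+ 2 * sqmod (g n) /\
    (forall n, toC (theta * xsig po f rho p w n) * g n = ysig po f rho w n).

End PS.

(* Main.v *)
Require Import Defs.
From HB Require Import structures.
From mathcomp Require Import all_boot all_order all_algebra.
From mathcomp Require Import all_classical all_reals all_analysis.
From mathcomp Require Import complex.
From mathcomp Require Import ring lra measurable_realfun.
Import Order.TTheory GRing.Theory Num.Theory.
Local Open Scope ring_scope.

Section H.
Variable R : realType.

Lemma toCM (a b : R) : toC a * toC b = toC (a * b).
Proof. rewrite /toC /=. congr Complex; ring. Qed.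

Lemma sqmodM (r : R) (z : R[i]) : sqmod (toC r * z) = r ^+ 2 * sqmod z.
Proof. case: z => a b; rewrite /sqmod /toC /=. ring. Qed.

Lemma sqmod_ge0 (z : R[i]) : 0 <= sqmod z.
Proof. by rewrite /sqmod addr_ge0 // sqr_ge0. Qed.

Lemma quadf_sq K (fn w : 'cV[R[i]]_K) :
  quadf fn w = sqmod ((hconj fn *m w) 0 0).
Proof.
rewrite /quadf /Wp !mulmxA -(mulmxA (hconj fn *m w)).
have E : (hconj w *m fn) 0 0 = conjc ((hconj fn *m w) 0 0).
  rewrite !mxE rmorph_sum; apply: eq_bigr => k _.
  by rewrite !mxE rmorphM /= conjcK mulrC.
rewrite mxE big_ord1 E.
case: ((hconj fn *m w) 0 0) => a b /=; rewrite /sqmod /=. ring.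
Qed.

Lemma quadf_ge0 K (fn w : 'cV[R[i]]_K) : 0 <= quadf fn w.
Proof. by rewrite quadf_sq sqmod_ge0. Qed.

Lemma hconjN m n (A : 'M[R[i]]_(m, n)) : hconj (- A) = - hconj A.
Proof. by apply/matrixP => i j; rewrite !mxE rmorphN. Qed.

Lemma WpN K (w : 'cV[R[i]]_K) : Wp (- w) = Wp w.
Proof. by rewrite /Wp hconjN mulmxN mulNmx opprK. Qed.

Lemma quadfN K (fn w : 'cV[R[i]]_K) : quadf fn (- w) = quadf fn w.
Proof. by rewrite /quadf WpN. Qed.

Lemma xsigN K N po (f : 'I_N -> 'cV[R[i]]_K) rho p w n :
  xsig po f rho p (- w) n = xsig po f rho p w n.
Proof. by rewrite /xsig quadfN. Qed.

Lemma ysigN K N po (f : 'I_N -> 'cV[R[i]]_K) rho w n :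
  ysig po f rho (- w) n = - ysig po f rho w n.
Proof. by rewrite /ysig mulmxN mxE mulrN. Qed.

Lemma sqmodN (z : R[i]) : sqmod (- z) = sqmod z.
Proof. case: z => a b; rewrite /sqmod /=. ring. Qed.

Lemma toCN (a : R) : toC (- a) = - toC a.
Proof. by rewrite /toC; apply/eqP; rewrite eq_complex /= oppr0 !eqxx. Qed.

Lemma feasN K N M po eta zeta X Y lam (f : 'I_N -> 'cV[R[i]]_K) g
  (mu : 'I_M -> 'I_N -> R[i]) Smx phibar th :
  feasibleS po eta zeta X Y lam f g mu Smx phibar th ->
  feasibleS po eta zeta X Y lam f g mu Smx phibar (- th).
Proof.
move=> [rho [p [w [[h1 [h2 [h3 [h4 h5]]]] [hY [hX hE]]]]]].
exists rho, p, (- w); split; first split => //.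
  split; first by move=> n; rewrite quadfN.
  by split => //; split => //; rewrite WpN.
split; first by under eq_bigr do rewrite ysigN sqmodN.
split; first by under eq_bigr do rewrite xsigN.
by move=> n; rewrite xsigN ysigN mulNr toCN mulNr hE.
Qed.
Local Open Scope classical_set_scope.

Lemma mfun_sum (d : measure_display) (T : measurableType d) (I : Type)
  (s : seq I) (F : I -> T -> R) :
  (forall i, measurable_fun setT (F i)) ->
  measurable_fun setT (fun t => \sum_(i <- s) F i t).
Proof.
move=> mF; elim: s => [|a s IH].
  by under eq_fun do rewrite big_nil; exact: measurable_cst.
under eq_fun do rewrite big_cons.
exact: measurable_funD.
Qed.

Lemma dr_mono N (p p' : 'I_N -> R) mu Smx phibar zeta :
  (forall n, 0 <= p' n <= p n) ->
  dr_chance p mu Smx phibar zeta -> dr_chance p' mu Smx phibar zeta.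
Proof.
move=> hp hd d T P Z hm h1 h2.
apply: le_trans (hd d T P Z hm h1 h2).
have mS : forall q : 'I_N -> R, measurable [set t | (phibar <= \sum_(n < N) sqmod (Z n t) * q n)%R].
  move=> q.
  have mf : measurable_fun setT (fun t => \sum_(n < N) sqmod (Z n t) * q n).
    apply: mfun_sum => n; apply: measurable_funM; last exact: measurable_cst.
    rewrite /sqmod; have [mr mi] := hm n.
    by apply: measurable_funD; apply: measurable_funX.
  have := mf measurableT _ (measurable_itv (Interval (BLeft phibar) (BInfty _ false))).
  rewrite setTI; congr measurable; apply/seteqP; split => t /=;
    by rewrite in_itv /= andbT.
apply: le_measure; rewrite ?inE; [exact: mS|exact: mS|].
move=> t /= H; apply: le_trans H _; apply: ler_sum => n _.
by apply: ler_wpM2l; [exact: sqmod_ge0| case/andP: (hp n)].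
Qed.
Lemma caseA K N M po eta zeta X Y lam (f : 'I_N -> 'cV[R[i]]_K) g
  (mu : 'I_M -> 'I_N -> R[i]) Smx phibar th :
  0 < X -> 0 <= lam -> 0 < th -> th <= Num.sqrt (Y / X) ->
  feasibleS po eta zeta X Y lam f g mu Smx phibar th ->
  feasibleS po eta zeta X Y lam f g mu Smx phibar (Num.sqrt (Y / X)).
Proof.
set k := Num.sqrt (Y / X) => hX hl hth hk.
move=> [rho [p [w [[h1 [h2 [h3 [h4 h5]]]] [hY [hXc hE]]]]]].
have kp : 0 < k by apply: lt_le_trans hk.
set a := th / k.
have a0 : 0 <= a by rewrite divr_ge0 // ltW.
have a1 : a <= 1 by rewrite ler_pdivrMr // mul1r.
have hx : forall n, xsig po f rho (fun n => a ^+ 2 * p n) w n = a * xsig po f rho p w n.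
  move=> n; rewrite /xsig /= -[a ^+ 2 * p n / _]mulrA sqrtrM ?sqr_ge0 // sqrtr_sqr ger0_norm //.
have hE' : forall n, toC (k * xsig po f rho (fun n => a ^+ 2 * p n) w n) * g n = ysig po f rho w n.
  move=> n; rewrite hx mulrA /a mulrCA divff ?mulr1 ?hE //; exact: lt0r_neq0.
have YX : 0 < Y / X by rewrite -sqrtr_gt0.
have k2 : k ^+ 2 = Y / X by rewrite sqr_sqrtr // ltW.
exists rho, (fun n => a ^+ 2 * p n), w; split.
  split.
    move=> m; apply: dr_mono (h1 m) => n.
    rewrite mulr_ge0 ?sqr_ge0 ?h4 //= ler_piMl ?h4 //.
    by rewrite expr_le1.
  split; first by move=> n; apply: le_trans (h2 n); rewrite ler_piMl ?h4 // expr_le1.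
  split => //; split => // n; rewrite mulr_ge0 ?sqr_ge0 ?h4 //.
split => //; split => //.
have : lam * Y <= k ^+ 2 * \sum_(n < N) xsig po f rho (fun n => a ^+ 2 * p n) w n ^+ 2 * sqmod (g n).
  apply: (le_trans hY); rewrite mulr_sumr le_eqVlt; apply/orP; left; apply/eqP.
  by apply: eq_bigr => n _; rewrite -(hE' n) sqmodM exprMn -mulrA.
rewrite k2 => H.
rewrite -(ler_pM2l YX); apply: le_trans H.
have -> : Y / X * (lam * X) = lam * Y by field; exact: lt0r_neq0.
by [].
Qed.
Lemma quad_sol (u c : R) : 0 <= u -> 0 <= c -> c <= u + 1 ->
  let t := 2 * c / (1 + Num.sqrt (1 + 4 * u * c)) in
  0 <= t <= 1 /\ t * (t * u + 1) = c.
Proof.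
move=> u0 c0 cu t.
set S := Num.sqrt (1 + 4 * u * c).
have S0 : 0 <= S by apply: sqrtr_ge0.
have hS : S ^+ 2 = 1 + 4 * u * c by rewrite sqr_sqrtr //; nra.
have S1 : 0 < 1 + S by lra.
have E : t * (1 + S) = 2 * c by rewrite /t divfK // lt0r_neq0.
split.
  apply/andP; split; first by rewrite /t divr_ge0 //; lra.
  rewrite /t ler_pdivrMr // mul1r.
  rewrite leNgt; apply/negP => H.
  have : S ^+ 2 < (2 * c - 1) ^+ 2.
    rewrite -subr_gt0 subr_sqr; rewrite -/S in H; apply: mulr_gt0; lra.
  rewrite hS; nra.
apply: (@mulfI _ ((1 + S) ^+ 2)); first by rewrite expf_neq0 // lt0r_neq0.
have -> : (1 + S) ^+ 2 * (t * (t * u + 1)) = u * (t * (1 + S)) ^+ 2 + (1 + S) * (t * (1 + S)) by ring.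
rewrite E.
have -> : (1 + S) ^+ 2 * c = c * (1 + 2 * S) + c * S ^+ 2 by ring.
rewrite hS; ring.
Qed.
Lemma a_sqrt (a b : R) : 0 <= a -> a * Num.sqrt b = Num.sqrt (a ^+ 2 * b).
Proof. by move=> a0; rewrite sqrtrM ?sqr_ge0 // sqrtr_sqr ger0_norm. Qed.

Lemma caseB K N M po eta zeta X Y lam (f : 'I_N -> 'cV[R[i]]_K) g
  (mu : 'I_M -> 'I_N -> R[i]) Smx phibar th :
  0 < po -> 0 < eta -> 0 < X -> 0 <= Y -> 0 <= lam -> 0 < th ->
  Num.sqrt (Y / X) <= th ->
  feasibleS po eta zeta X Y lam f g mu Smx phibar th ->
  feasibleS po eta zeta X Y lam f g mu Smx phibar (Num.sqrt (Y / X)).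
Proof.
set k := Num.sqrt (Y / X) => hpo het hX hY0 hl hth hk.
move=> [rho [p [w [[h1 [h2 [h3 [h4 h5]]]] [hY [hXc hE]]]]]].
have k0 : 0 <= k by apply: sqrtr_ge0.
have k2 : k ^+ 2 = Y / X by rewrite sqr_sqrtr // divr_ge0 // ltW.
set r := k ^+ 2 / th ^+ 2.
have r0 : 0 <= r by rewrite divr_ge0 ?sqr_ge0.
have r1 : r <= 1.
  rewrite /r ler_pdivrMr ?exprn_gt0 // mul1r.
  by rewrite ler_sqr ?nnegrE // ltW.
set Q := fun n => quadf (f n) w.
set u := fun n => (1 - rho n) * po * Q n.
have u0 : forall n, 0 <= u n.
  move=> n; rewrite /u !mulr_ge0 ?quadf_ge0 ?(ltW hpo) //.
  by case/andP: (h3 n) => _ ?; rewrite subr_ge0.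
set c := fun n => r * (u n + 1).
set t := fun n => 2 * c n / (1 + Num.sqrt (1 + 4 * u n * c n)).
have ht : forall n, 0 <= t n <= 1 /\ t n * (t n * u n + 1) = c n.
  move=> n; apply: quad_sol => //; first by rewrite /c mulr_ge0 // addr_ge0.
  by rewrite /c ler_piMl // addr_ge0.
set rho' := fun n => 1 - t n * (1 - rho n).
have e1 : forall n, 1 - rho' n = t n * (1 - rho n) by move=> n; rewrite /rho'; ring.
have hxs : forall n, xsig po f rho' p w n = Num.sqrt (p n / (t n * u n + 1)).
  by move=> n; rewrite /xsig e1 /u /Q -!mulrA.
have hxo : forall n, xsig po f rho p w n = Num.sqrt (p n / (u n + 1)).
  by move=> n.
have hys : forall n, ysig po f rho' w n = toC (Num.sqrt (t n)) * ysig po f rho w n.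
  move=> n; rewrite /ysig e1 -mulrA sqrtrM; last by case: (ht n) => /andP[].
  by rewrite -toCM mulrA.
have key : forall n, k * xsig po f rho' p w n = Num.sqrt (t n) * (th * xsig po f rho p w n).
  move=> n; have [/andP[t0 t1] tE] := ht n.
  rewrite hxs hxo a_sqrt // (@a_sqrt th _ (ltW hth)) -sqrtrM //.
  congr Num.sqrt.
  have -> : k ^+ 2 = r * th ^+ 2 by rewrite /r divfK // expf_neq0 // lt0r_neq0.
  have -> : r = t n * (t n * u n + 1) / (u n + 1).
    by rewrite tE /c mulfK // lt0r_neq0 // ltr_wpDl.
  have : t n * u n + 1 != 0 by rewrite lt0r_neq0 // ltr_wpDl // mulr_ge0.
  have : u n + 1 != 0 by rewrite lt0r_neq0 // ltr_wpDl.
  move=> ? ?; field; apply/andP; split => //.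
have hE' : forall n, toC (k * xsig po f rho' p w n) * g n = ysig po f rho' w n.
  by move=> n; rewrite key -toCM -mulrA hE hys.
have hxx : forall n, xsig po f rho p w n ^+ 2 <= xsig po f rho' p w n ^+ 2.
  move=> n; have [/andP[t0 t1] tE] := ht n.
  have d1 : 0 < u n + 1 by rewrite ltr_wpDl.
  have d2 : 0 < t n * u n + 1 by rewrite ltr_wpDl // mulr_ge0.
  rewrite hxs hxo !sqr_sqrtr ?divr_ge0 ?h4 ?(ltW d1) ?(ltW d2) //.
  apply: ler_wpM2l; first exact: h4.
  rewrite lef_pV2 ?posrE //.
  by rewrite lerD2r ler_piMl.
have hXn : lam * X <= \sum_(n < N) xsig po f rho' p w n ^+ 2 * sqmod (g n).
  apply: (le_trans hXc); apply: ler_sum => i _.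
  by apply: ler_wpM2r; [exact: sqmod_ge0|exact: hxx].
exists rho', p, w; split.
  split; first exact: h1. split.
    move=> n; apply: (le_trans (h2 n)); rewrite -/(Q n); apply: ler_wpM2r; first exact: quadf_ge0.
    apply: ler_wpM2l; first by rewrite mulr_ge0 // ltW.
    have [/andP[t0 t1] _] := ht n; case/andP: (h3 n) => r0' r1'.
    rewrite /rho'; nra.
  split => //; move=> n; have [/andP[t0 t1] _] := ht n; case/andP: (h3 n) => r0' r1'.
  by rewrite /rho'; apply/andP; split; nra.
split; last by split.
have -> : \sum_(n < N) sqmod (ysig po f rho' w n) = k ^+ 2 * \sum_(n < N) xsig po f rho' p w n ^+ 2 * sqmod (g n).
  by rewrite mulr_sumr; apply: eq_bigr => n _; rewrite -(hE' n) sqmodM exprMn -mulrA.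
rewrite k2; apply: le_trans (ler_wpM2l (divr_ge0 hY0 (ltW hX)) hXn).
rewrite le_eqVlt; apply/orP; left; apply/eqP; field; exact: lt0r_neq0.
Qed.
End H.

Theorem proposition6 (R : realType) (K N M : nat) (po eta zeta X Y lam : R)
  (f : 'I_N -> 'cV[R[i]]_K) (g : 'I_N -> R[i])
  (mu : 'I_M -> 'I_N -> R[i]) (Smx : 'I_M -> 'M[R[i]]_N) (phibar : 'I_M -> R) :
  0 < po -> 0 < eta <= 1 -> 0 < zeta < 1 -> (forall m, 0 < phibar m) ->
  0 < X -> 0 <= Y -> 0 <= lam ->
  (exists theta : R, theta != 0 /\
     feasibleS po eta zeta X Y lam f g mu Smx phibar theta) ->
  feasibleS po eta zeta X Y lam f g mu Smx phibar (Num.sqrt (Y / X)).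
Proof.
move=> hpo /andP[het _] _ _ hX hY hl [th [th0 hF]].
have [th' [hth' hF']] : exists th', 0 < th' /\
    feasibleS po eta zeta X Y lam f g mu Smx phibar th'.
  have [thn|thp] := ltP th 0.
    by exists (- th); split; [rewrite oppr_gt0 | exact: feasN].
  by exists th; split => //; rewrite lt_neqAle eq_sym th0.
have [h|h] := leP th' (Num.sqrt (Y / X)).
  exact: (@caseA R K N M po eta zeta X Y lam f g mu Smx phibar th' hX hl hth' h hF').
exact: (@caseB R K N M po eta zeta X Y lam f g mu Smx phibar th' hpo het hX hY hl hth' (ltW h) hF').
Qed.
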